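(* Let $A$ be a symmetric adornment with base $[x,y]$. Then $A$ is slender if and only if $A$ is a union of sets of the form $B(x,r)\cap B(y,s)$ (for some family of radius pairs $(r,s)$), where $B(c,\rho)$ denotes the closed disk of radius $\rho$ centered at $c$.
   Context: An adornment is a compact simply connected region $S\subset\mathbb{R}^2$ together with a segment $[x,y]$, $x\neq y$, whose endpoints lie on the boundary of $S$ and with $[x,y]\subseteq S$ (the base). The boundary of $S$ consists of two arcs from $x$ to $y$ (the sides). The adornment is slender if, for a point $p$ moving along either side from $x$ to $y$, $\|p-x\|$ is nondecreasing and $\|p-y\|$ is nonincreasing. It is symmetric if invariant under reflection in the line through $x,y$. *)

(* Defs.v *)
From HB Require Import structures.
From mathcomp Require Import all_boot all_order all_algebra.
From mathcomp Require Import all_classical all_reals topology normedtype.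
Set Implicit Arguments. Unset Strict Implicit. Unset Printing Implicit Defensive.
Import Order.TTheory GRing.Theory Num.Theory.
Import numFieldNormedType.Exports.
Local Open Scope classical_set_scope.
Local Open Scope ring_scope.

Section Plane.
Variable R : realType.
Notation pt := (R * R)%type.

Definition edist (p q : pt) : R :=
  Num.sqrt ((p.1 - q.1) ^+ 2 + (p.2 - q.2) ^+ 2).

Definition cdisk (c : pt) (rho : R) : set pt := [set p | edist p c <= rho].

Definition segment (x y : pt) : set pt :=
  [set p | exists2 t : R, 0 <= t <= 1 &
     p = (x.1 + t * (y.1 - x.1), x.2 + t * (y.2 - x.2))].

Definition bdry (S : set pt) : set pt := closure S `\` interior S.

Definition I01 : set R := [set t | 0 <= t <= 1].

Definition is_arc (g : R -> pt) (a b : pt) : Prop :=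
  {within I01, continuous g} /\
  (forall s t, I01 s -> I01 t -> g s = g t -> s = t) /\
  g 0 = a /\ g 1 = b.

Definition simply_connected (S : set pt) : Prop :=
  (forall a b, S a -> S b -> exists g : R -> pt,
      [/\ {within I01, continuous g}, g @` I01 `<=` S, g 0 = a & g 1 = b]) /\
  (forall g : R -> pt, {within I01, continuous g} -> g @` I01 `<=` S ->
     g 0 = g 1 ->
     exists H : pt -> pt,
       [/\ {within I01 `*` I01, continuous H},
           H @` (I01 `*` I01) `<=` S,
           (forall t, I01 t -> H (t, 0) = g t),
           (forall t, I01 t -> H (t, 1) = g 0) &
           (forall s, I01 s -> H (0, s) = g 0 /\ H (1, s) = g 0)]).

Definition adornment (S : set pt) (x y : pt) : Prop :=
  [/\ compact S /\ simply_connected S, x <> y,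
      bdry S x /\ bdry S y, segment x y `<=` S &
      exists g1 g2 : R -> pt,
        [/\ is_arc g1 x y, is_arc g2 x y,
            bdry S = g1 @` I01 `|` g2 @` I01 &
            g1 @` I01 `&` g2 @` I01 = [set x; y]]].

(** Slender: along each side (any arc from x to y contained in the
    boundary), the distance to x is nondecreasing and the distance to y
    is nonincreasing. *)
Definition slender (S : set pt) (x y : pt) : Prop :=
  forall g : R -> pt, is_arc g x y -> g @` I01 `<=` bdry S ->
    forall s t, 0 <= s -> s <= t -> t <= 1 ->
      edist (g s) x <= edist (g t) x /\ edist (g t) y <= edist (g s) y.

Definition reflect_line (x y : pt) (p : pt) : pt :=
  let d1 := y.1 - x.1 in let d2 := y.2 - x.2 in
  let u := ((p.1 - x.1) * d1 + (p.2 - x.2) * d2) / (d1 ^+ 2 + d2 ^+ 2) in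
  (2 * (x.1 + u * d1) - p.1, 2 * (x.2 + u * d2) - p.2).

Definition symmetric_adornment (S : set pt) (x y : pt) : Prop :=
  adornment S x y /\ reflect_line x y @` S = S.

End Plane.

(* Main.v *)
Require Import Defs.
From HB Require Import structures.
From mathcomp Require Import all_boot all_order all_algebra.
From mathcomp Require Import all_classical all_reals topology normedtype.
From mathcomp Require Import ring lra.
Import Order.TTheory GRing.Theory Num.Theory.
Import numFieldNormedType.Exports.
Local Open Scope classical_set_scope.
Local Open Scope ring_scope.
Set Implicit Arguments. Unset Strict Implicit.

Section Aux.
Variable R : realType.
Notation pt := (R * R)%type.

Definition sq (p q : pt) : R := (p.1 - q.1) ^+ 2 + (p.2 - q.2) ^+ 2.

Lemma sq_ge0 p q : 0 <= sq p q.
Proof. by rewrite /sq addr_ge0 // sqr_ge0. Qed.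

Lemma edist_le p q p' q' : (Defs.edist p q <= Defs.edist p' q') = (sq p q <= sq p' q').
Proof. by rewrite /Defs.edist ler_sqrt // sq_ge0. Qed.

Lemma sq_eq0 p q : sq p q = 0 -> p = q.
Proof.
case: p q => [p1 p2] [q1 q2]; rewrite /sq /= => /eqP.
rewrite paddr_eq0 ?sqr_ge0 // !sqrf_eq0 !subr_eq0 => /andP[/eqP -> /eqP ->].
by [].
Qed.

Lemma sqxx p : sq p p = 0.
Proof. by rewrite /sq !subrr expr0n /= addr0. Qed.

Lemma sqC p q : sq p q = sq q p.
Proof. rewrite /sq; ring. Qed.
End Aux.
Section Refl.
Variable R : realType.
Notation pt := (R * R)%type.
Variables x y : pt.
Hypothesis xy : x <> y.
Notation sig := (reflect_line x y).

Lemma D_neq0 : (y.1 - x.1) ^+ 2 + (y.2 - x.2) ^+ 2 != 0.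
Proof.
apply/eqP => h; apply: xy; apply/esym/sq_eq0; exact: h.
Qed.

Lemma refl_invol p : sig (sig p) = p.
Proof.
have hD := D_neq0; move: hD.
case: x y p => [x1 x2] [y1 y2] [p1 p2]; rewrite /reflect_line /= => hD.
congr pair; field; exact: hD.
Qed.

Lemma sq_refl_x p : sq (sig p) x = sq p x.
Proof.
have hD := D_neq0; move: hD.
case: x y p => [x1 x2] [y1 y2] [p1 p2]; rewrite /reflect_line /sq /= => hD.
field; exact: hD.
Qed.

Lemma sq_refl_y p : sq (sig p) y = sq p y.
Proof.
have hD := D_neq0; move: hD.
case: x y p => [x1 x2] [y1 y2] [p1 p2]; rewrite /reflect_line /sq /= => hD.
field; exact: hD.
Qed.

Lemma refl_x : sig x = x.
Proof.
have hD := D_neq0; move: hD.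
case: x y => [x1 x2] [y1 y2]; rewrite /reflect_line /= => hD.
congr pair; field; exact: hD.
Qed.

Lemma refl_y : sig y = y.
Proof.
have hD := D_neq0; move: hD.
case: x y => [x1 x2] [y1 y2]; rewrite /reflect_line /= => hD.
congr pair; field; exact: hD.
Qed.
End Refl.
Section Twin.
Variable R : realType.
Notation pt := (R * R)%type.
Variables x y : pt.
Hypothesis xy : x <> y.
Notation sig := (reflect_line x y).

Lemma twin p q : sq q x = sq p x -> sq q y = sq p y -> q = p \/ q = sig p.
Proof.
have hD := D_neq0 xy; move: hD.
case: x y p q => [x1 x2] [y1 y2] [p1 p2] [q1 q2]; rewrite /reflect_line /sq /= => hD hx hy.
set d1 := y1 - x1; set d2 := y2 - x2.
set a1 := q1 - p1; set a2 := q2 - p2.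
set z1 := q1 + p1 - 2 * x1; set z2 := q2 + p2 - 2 * x2.
have E1 : a1 * d1 + a2 * d2 = 0.
  rewrite /a1 /d1 /a2 /d2; apply/eqP; rewrite -subr_eq0; apply/eqP.
  have : (q1 - x1) ^+ 2 + (q2 - x2) ^+ 2 - ((q1 - y1) ^+ 2 + (q2 - y2) ^+ 2)
     = (p1 - x1) ^+ 2 + (p2 - x2) ^+ 2 - ((p1 - y1) ^+ 2 + (p2 - y2) ^+ 2) by rewrite hx hy.
  move=> h; have : ((q1 - p1) * (y1 - x1) + (q2 - p2) * (y2 - x2)) * 2 = 0.
    by rewrite -[LHS]subr0 -(subrr ((p1 - x1) ^+ 2 + (p2 - x2) ^+ 2 - ((p1 - y1) ^+ 2 + (p2 - y2) ^+ 2))) -{1}h; ring.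
  by move/eqP; rewrite mulf_eq0 pnatr_eq0 orbF => /eqP ->; rewrite subr0.
have E2 : a1 * z1 + a2 * z2 = 0.
  have : a1 * z1 + a2 * z2 = ((q1 - x1) ^+ 2 + (q2 - x2) ^+ 2) - ((p1 - x1) ^+ 2 + (p2 - x2) ^+ 2).
    by rewrite /a1 /z1 /a2 /z2; ring.
  by rewrite hx subrr.
have [/andP[/eqP ha1 /eqP ha2]|hna] := boolP ((a1 == 0) && (a2 == 0)).
  left; congr pair; apply/eqP; rewrite -subr_eq0; apply/eqP; [exact: ha1 | exact: ha2].
right.
have cr : d1 * z2 - d2 * z1 = 0.
  move: hna; rewrite negb_and => /orP [h|h].
    have : a1 * (d1 * z2 - d2 * z1) = 0.
      have -> : a1 * (d1 * z2 - d2 * z1) = z2 * (a1 * d1 + a2 * d2) - d2 * (a1 * z1 + a2 * z2) by ring.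
      by rewrite E1 E2 !mulr0 subrr.
    by move/eqP; rewrite mulf_eq0 (negbTE h) /= => /eqP.
  have : a2 * (d1 * z2 - d2 * z1) = 0.
    have -> : a2 * (d1 * z2 - d2 * z1) = d1 * (a1 * z1 + a2 * z2) - z1 * (a1 * d1 + a2 * d2) by ring.
    by rewrite E1 E2 !mulr0 subrr.
  by move/eqP; rewrite mulf_eq0 (negbTE h) /= => /eqP.
set ud := (p1 - x1) * d1 + (p2 - x2) * d2.
set D := d1 ^+ 2 + d2 ^+ 2.
have k1 : z1 = 2 * ud * d1 / D.
  apply: (mulIf hD); rewrite mulfVK //; apply/eqP; rewrite -subr_eq0; apply/eqP.
  have -> : z1 * D - 2 * ud * d1 = d1 * (a1 * d1 + a2 * d2) - d2 * (d1 * z2 - d2 * z1).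
    by rewrite /z1 /D /ud /a1 /a2 /z2 /d1 /d2; ring.
  by rewrite E1 cr !mulr0 subrr.
have k2 : z2 = 2 * ud * d2 / D.
  apply: (mulIf hD); rewrite mulfVK //; apply/eqP; rewrite -subr_eq0; apply/eqP.
  have -> : z2 * D - 2 * ud * d2 = d2 * (a1 * d1 + a2 * d2) + d1 * (d1 * z2 - d2 * z1).
    by rewrite /z1 /D /ud /a1 /a2 /z2 /d1 /d2; ring.
  by rewrite E1 cr !mulr0 addr0.
move: k1 k2; rewrite /z1 /z2 => k1 k2.
congr pair.
  have -> : 2 * (x1 + ud / D * d1) - p1 = 2 * x1 + 2 * ud * d1 / D - p1 by ring.
  lra.
have -> : 2 * (x2 + ud / D * d2) - p2 = 2 * x2 + 2 * ud * d2 / D - p2 by ring.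
lra.
Qed.
End Twin.
Section Mid.
Variable R : realType.
Notation pt := (R * R)%type.
Variables x y : pt.
Hypothesis xy : x <> y.
Notation sig := (reflect_line x y).

Lemma three p q r : sq q x = sq p x -> sq q y = sq p y ->
  sq r x = sq p x -> sq r y = sq p y -> q <> p -> r <> p -> q <> r -> False.
Proof.
move=> h1 h2 h3 h4 n1 n2 n3.
have [//|eq1] := twin xy h1 h2.
have [//|eq2] := twin xy h3 h4.
by apply: n3; rewrite eq1 eq2.
Qed.

Lemma mid_fix z : sig z = z ->
  (z.1 - x.1) * (y.1 - x.1) + (z.2 - x.2) * (y.2 - x.2) =
    ((y.1 - x.1) ^+ 2 + (y.2 - x.2) ^+ 2) / 2 ->
  z = ((x.1 + y.1) / 2, (x.2 + y.2) / 2).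
Proof.
have hD := D_neq0 xy; move: hD.
case: x y z => [x1 x2] [y1 y2] [z1 z2]; rewrite /reflect_line /= => hD [e1 e2] hn.
rewrite hn in e1 e2.
have hh : ((y1 - x1) ^+ 2 + (y2 - x2) ^+ 2) / 2 / ((y1 - x1) ^+ 2 + (y2 - x2) ^+ 2) = 1/2.
  by field.
rewrite hh in e1 e2.
congr pair; lra.
Qed.

Lemma mid_neq_x : ((x.1 + y.1) / 2, (x.2 + y.2) / 2) <> x.
Proof.
move: xy; case: x y => [x1 x2] [y1 y2] /= hne [h1 h2]; apply: hne.
congr pair; lra.
Qed.
End Mid.
Section Mid2.
Variable R : realType.
Notation pt := (R * R)%type.
Variables x y : pt.
Hypothesis xy : x <> y.
Lemma mid_neq_y : ((x.1 + y.1) / 2, (x.2 + y.2) / 2) <> y.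
Proof.
move: xy; case: x y => [x1 x2] [y1 y2] /= hne [h1 h2]; apply: hne.
congr pair; lra.
Qed.
End Mid2.
Section Topo.
Variable R : realType.
Notation pt := (R * R)%type.

Lemma pt_hausdorff : hausdorff_space pt.
Proof. exact: norm_hausdorff. Qed.

Lemma cont_pair (f g : R -> R) : continuous f -> continuous g ->
  continuous (fun t => (f t, g t)).
Proof.
move=> cf cg t; rewrite /continuous_at.
apply: (@cvg_pair _ _ _ _ (nbhs (f t)) (nbhs (g t))); [exact: cf|exact: cg].
Qed.

Lemma cont_pair2 (f g : pt -> R) : continuous f -> continuous g ->
  continuous (fun t => (f t, g t)).
Proof.
move=> cf cg t; rewrite /continuous_at.
apply: (@cvg_pair _ _ _ _ (nbhs (f t)) (nbhs (g t))); [exact: cf|exact: cg].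
Qed.

Lemma cont_fst : continuous (fun p : pt => p.1).
Proof. move=> p; exact: cvg_fst. Qed.
Lemma cont_snd : continuous (fun p : pt => p.2).
Proof. move=> p; exact: cvg_snd. Qed.

Lemma sq_cont c : continuous (fun p : pt => sq p c).
Proof.
move=> p; rewrite /sq.
apply: cvgD; rewrite expr2; apply: cvgM; apply: cvgB;
  (exact: cont_fst || exact: cont_snd || exact: cvg_cst).
Qed.

Lemma refl_cont (x y : pt) : continuous (reflect_line x y).
Proof.
rewrite /reflect_line.
apply: cont_pair2 => p.
- apply: cvgB; last exact: cont_fst.
  apply: cvgM; first exact: cvg_cst.
  apply: cvgD; first exact: cvg_cst.
  apply: cvgM; last exact: cvg_cst.
  apply: cvgM; last exact: cvg_cst.
  apply: cvgD; apply: cvgM; (try exact: cvg_cst); apply: cvgB;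
    (exact: cont_fst || exact: cont_snd || exact: cvg_cst).
- apply: cvgB; last exact: cont_snd.
  apply: cvgM; first exact: cvg_cst.
  apply: cvgD; first exact: cvg_cst.
  apply: cvgM; last exact: cvg_cst.
  apply: cvgM; last exact: cvg_cst.
  apply: cvgD; apply: cvgM; (try exact: cvg_cst); apply: cvgB;
    (exact: cont_fst || exact: cont_snd || exact: cvg_cst).
Qed.

Lemma compact_closed_pt (S : set pt) : compact S -> closed S.
Proof. move=> cS; exact: compact_closed pt_hausdorff cS. Qed.

Lemma sep_conn (T : topologicalType) (C P Q : set T) :
  connected C -> closed P -> closed Q -> C `<=` P `|` Q ->
  (forall z, C z -> P z -> Q z -> False) -> C `<=` P \/ C `<=` Q.
Proof.
move=> cC cP cQ CPQ dis.
apply: contrapT => hn.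
have [c1 [C1 nP1]] : exists c, C c /\ ~ P c.
  apply: contrapT => h; apply: hn; left => z Cz; apply: contrapT => nPz; apply: h; by exists z.
have [c2 [C2 nQ2]] : exists c, C c /\ ~ Q c.
  apply: contrapT => h; apply: hn; right => z Cz; apply: contrapT => nQz; apply: h; by exists z.
have : ~ connected C.
  apply/connectedPn.
  exists (fun b => if b then C `&` Q else C `&` P); split.
  - case.
    + exists c1; split => //; by case: (CPQ _ C1).
    + exists c2; split => //; by case: (CPQ _ C2).
  - apply/seteqP; split => z.
      by move=> Cz; case: (CPQ _ Cz) => h; [left|right].
    by case => -[].
  - split; apply/seteqP; split => // z [].
      move=> /(closureS (@subIsetr _ C P)); rewrite -(closure_id P).1 // => Pz [Cz Qz].
      exact: (dis z).
    move=> [Cz Pz] /(closureS (@subIsetr _ C Q)); rewrite -(closure_id Q).1 // => Qz.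
    exact: (dis z).
by [].
Qed.
End Topo.
Section Arc.
Variable R : realType.
Notation pt := (R * R)%type.
Notation I := (@I01 R).

Lemma itvP01 (a b t : R) : `[a, b]%classic t <-> a <= t <= b.
Proof. by rewrite /= in_itv. Qed.

Lemma sub_cont (g : R -> pt) (a b : R) : {within I, continuous g} -> 0 <= a -> b <= 1 ->
  {within `[a, b]%classic, continuous g}.
Proof.
move=> cg a0 b1; apply: continuous_subspaceW cg => t /itvP01 /andP[h1 h2].
rewrite /I01 /=; apply/andP; split; [exact: le_trans h1|exact: le_trans b1].
Qed.

Lemma img_closed (g : R -> pt) (a b : R) : {within I, continuous g} -> 0 <= a -> b <= 1 ->
  closed (g @` `[a, b]%classic).
Proof.
move=> cg a0 b1; apply: compact_closed_pt; apply: continuous_compact.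
  exact: sub_cont. exact: segment_compact.
Qed.

Definition injI (g : R -> pt) := forall s t, I s -> I t -> g s = g t -> s = t.

Lemma subarc (g : R -> pt) (C : set pt) (a b c : R) :
  {within I, continuous g} -> injI g -> connected C -> C `<=` g @` I ->
  I a -> I b -> a <= c <= b -> C (g a) -> C (g b) -> C (g c).
Proof.
move=> cg ig cC Csub Ia Ib /andP[ac cb] Cga Cgb.
have Ic : I c.
  move: Ia Ib; rewrite /I01 /= => /andP[a0 _] /andP[_ b1]; apply/andP; split.
    exact: le_trans ac. exact: le_trans b1.
move: (Ic); rewrite /I01 /= => /andP[c0 c1].
apply: contrapT => nC.
have [] := sep_conn cC (img_closed cg (lexx 0) c1) (img_closed cg c0 (lexx 1)).
- move=> z /Csub [t It <-]; move: (It); rewrite /I01 /= => /andP[t0 t1].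
  have [tc|ct] := lerP t c.
    by left; exists t => //; apply/itvP01/andP.
  by right; exists t => //; apply/itvP01/andP; split => //; exact: ltW.
- move=> z Cz [t1 /itvP01 /andP[h1 h2] e1] [t2 /itvP01 /andP[h3 h4] e2].
  have It1 : I t1 by rewrite /I01 /=; apply/andP; split => //; exact: le_trans c1.
  have It2 : I t2 by rewrite /I01 /=; apply/andP; split => //; exact: le_trans h3.
  have et : t1 = t2 by apply: ig => //; rewrite e1 e2.
  have t1c : t1 = c by apply/eqP; rewrite eq_le h2 et h3.
  by apply: nC; rewrite -t1c e1.
- move=> /(_ _ Cgb) [t /itvP01 /andP[t0 tc] e].
  have Itt : I t by rewrite /I01 /=; apply/andP; split => //; exact: le_trans c1.
  have tb : t = b by apply: ig.
  have bc : b = c by apply/eqP; rewrite eq_le cb -tb tc.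
  by apply: nC; rewrite -bc.
- move=> /(_ _ Cga) [t /itvP01 /andP[ct t1] e].
  have Itt : I t by rewrite /I01 /=; apply/andP; split => //; exact: le_trans ct.
  have ta : t = a by apply: ig.
  have ac' : a = c by apply/eqP; rewrite eq_le ac -ta ct.
  by apply: nC; rewrite -ac'.
Qed.
End Arc.
Section Tau.
Variable R : realType.
Notation pt := (R * R)%type.
Notation I := (@I01 R).

Lemma I_le (a b : R) : I a -> I b -> forall s, a <= s <= b -> I s.
Proof.
rewrite /I01 /= => /andP[a0 _] /andP[_ b1] s /andP[h1 h2]; apply/andP; split.
  exact: le_trans h1. exact: le_trans b1.
Qed.

Lemma tau (g : R -> pt) (sg : pt -> pt) :
  {within I, continuous g} -> injI g -> continuous sg -> (forall p, sg (sg p) = p) ->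
  sg (g 0) = g 0 -> (forall t, I t -> exists2 t', I t' & g t' = sg (g t)) ->
  forall t, I t -> sg (g t) = g t.
Proof.
move=> cg ig csg sgK sg0 part.
have I0 : I 0 by rewrite /I01 /= lexx ler01.
have step : forall t u, I t -> I u -> g u = sg (g t) -> forall s, 0 <= s <= u ->
    exists2 r, 0 <= r <= t & g s = sg (g r).
  move=> t u It Iu gu s hs.
  move: (It); rewrite /I01 /= => /andP[t0 t1].
  pose C := (sg \o g) @` `[0, t]%classic.
  have cC : connected C.
    apply: connected_continuous_connected; first exact: segment_connected.
    apply: within_continuous_comp; first by move=> z _; exact: csg.
    exact: sub_cont.
  have : C (g s).
    apply: (@subarc _ g C 0 u s) => //.
    - move=> z [r /itvP01 hr <-] /=.
      have Ir : I r by apply: (I_le I0 It).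
      have [r' Ir' e] := part r Ir; by exists r'.
    - by exists 0 => //; apply/itvP01; rewrite lexx t0.
    - by exists t => //; apply/itvP01; rewrite t0 lexx.
  by case=> r /itvP01 hr /= e; exists r.
have key : forall t u, I t -> I u -> g u = sg (g t) -> u <= t.
  move=> t u It Iu gu; rewrite leNgt; apply/negP => tu.
  move: (It) (Iu); rewrite /I01 /= => /andP[t0 t1] /andP[u0 u1].
  pose s := (t + u) / 2.
  have hs : 0 <= s <= u by apply/andP; split; rewrite /s; lra.
  have [r hr e] := step t u It Iu gu s hs.
  have Is : I s by apply: (I_le I0 Iu).
  have Ir : I r by apply: (I_le I0 It).
  have hr' : 0 <= r <= u by move: hr => /andP[h1 h2]; apply/andP; split => //; lra.
  have [r2 hr2 e2] := step t u It Iu gu r hr'.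
  have : g r2 = g s by rewrite e e2 sgK.
  move/(ig _ _ (I_le I0 It hr2) Is) => rs.
  by move: hr2 tu; rewrite rs /s => /andP[_ h] tu2; clear -h tu2; lra.
move=> t It.
have [u Iu gu] := part t It.
have h1 := key t u It Iu gu.
have h2 : t <= u by apply: (key u t Iu It); rewrite gu sgK.
have tu : t = u by apply/eqP; rewrite eq_le h1 h2 andbT.
by rewrite {2}tu gu.
Qed.
End Tau.
Section Dich.
Variable R : realType.
Notation pt := (R * R)%type.
Notation I := (@I01 R).

Lemma dich (h : R -> pt) (P Q : set pt) (x y : pt) :
  {within I, continuous h} -> injI h -> h 0 = x -> h 1 = y -> closed P -> closed Q ->
  (forall t, I t -> P (h t) \/ Q (h t)) -> (forall z, P z -> Q z -> z = x \/ z = y) ->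
  P x -> P y -> Q x -> Q y ->
  (forall t, I t -> P (h t)) \/ (forall t, I t -> Q (h t)).
Proof.
move=> ch ih h0 h1 cP cQ PQ dis Px Py Qx Qy.
have I0 : I 0 by rewrite /I01 /= lexx ler01.
have I1 : I 1 by rewrite /I01 /= lexx ler01.
pose C := h @` [set` `]0, 1[ ].
have cC : connected C.
  apply: connected_continuous_connected.
    apply/connected_intervalP; exact: interval_is_interval.
  apply: continuous_subspaceW ch => t /=; rewrite in_itv /= => /andP[h2 h3].
  by rewrite /I01 /=; apply/andP; split; exact: ltW.
have s1 : C `<=` P `|` Q.
  move=> z [t /=]; rewrite in_itv /= => /andP[h2 h3] <-.
  apply: PQ; rewrite /I01 /=; apply/andP; split; exact: ltW.
have s2 : forall z, C z -> P z -> Q z -> False.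
  move=> z [t /=]; rewrite in_itv /= => /andP[h2 h3] <- hP hQ.
  have It : I t by rewrite /I01 /=; apply/andP; split; exact: ltW.
  case: (dis _ hP hQ) => e.
    have : t = 0 by apply: ih => //; rewrite e.
    by move=> t0; rewrite t0 ltxx in h2.
  have : t = 1 by apply: ih => //; rewrite e.
  by move=> t0; rewrite t0 ltxx in h3.
have [CP|CQ] := sep_conn cC cP cQ s1 s2.
- left => t It; move: (It); rewrite /I01 /= => /andP[t0 t1].
  have [e0|n0] := eqVneq t 0; first by rewrite e0 h0.
  have [e1|n1] := eqVneq t 1; first by rewrite e1 h1.
  apply: CP; exists t => //=; rewrite in_itv /=; apply/andP; split.
    by rewrite lt_neqAle eq_sym n0 t0.
  by rewrite lt_neqAle n1 t1.
- right => t It; move: (It); rewrite /I01 /= => /andP[t0 t1].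
  have [e0|n0] := eqVneq t 0; first by rewrite e0 h0.
  have [e1|n1] := eqVneq t 1; first by rewrite e1 h1.
  apply: CQ; exists t => //=; rewrite in_itv /=; apply/andP; split.
    by rewrite lt_neqAle eq_sym n0 t0.
  by rewrite lt_neqAle n1 t1.
Qed.
End Dich.
Section Sym.
Variable R : realType.
Notation pt := (R * R)%type.
Notation I := (@I01 R).
Variables (S : set pt) (x y : pt) (g1 g2 : R -> pt).
Hypothesis xy : x <> y.
Hypothesis cS : closed S.
Hypothesis symS : reflect_line x y @` S = S.
Hypothesis a1 : is_arc g1 x y.
Hypothesis a2 : is_arc g2 x y.
Hypothesis hb : bdry S = g1 @` I `|` g2 @` I.
Hypothesis hi : g1 @` I `&` g2 @` I = [set x; y].
Notation sig := (reflect_line x y).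

Lemma I01E : I = `[0, 1]%classic.
Proof. by rewrite set_itvcc. Qed.

Lemma bdry_refl z : bdry S z -> bdry S (sig z).
Proof.
rewrite /bdry -(closure_id S).1 // => -[Sz nint]; split.
  by rewrite -symS; exists z.
move=> hn; apply: nint.
have := @refl_cont R x y z S hn.
move=> h2; rewrite /interior /=.
have h3 : nbhs z (sig @^-1` S) := h2.
apply: (filterS _ h3) => w /= Sw.
by rewrite -(refl_invol xy w) -symS; exists (sig w).
Qed.

Lemma closed_img g : is_arc g x y -> closed (g @` I).
Proof. by case=> cg _; rewrite I01E; apply: img_closed. Qed.

End Sym.
Section Sym2.
Variable R : realType.
Notation pt := (R * R)%type.
Notation I := (@I01 R).
Variables (S : set pt) (x y : pt) (g1 g2 : R -> pt).
Hypothesis xy : x <> y.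
Hypothesis cS : closed S.
Hypothesis symS : reflect_line x y @` S = S.
Hypothesis a1 : is_arc g1 x y.
Hypothesis a2 : is_arc g2 x y.
Hypothesis hb : bdry S = g1 @` I `|` g2 @` I.
Hypothesis hi : g1 @` I `&` g2 @` I = [set x; y].
Notation sig := (reflect_line x y).

Definition proj (p : pt) := (p.1 - x.1) * (y.1 - x.1) + (p.2 - x.2) * (y.2 - x.2).

Lemma proj_cont : continuous proj.
Proof.
move=> p; rewrite /proj; apply: cvgD; apply: cvgM; (try exact: cvg_cst); apply: cvgB;
  (exact: cont_fst || exact: cont_snd || exact: cvg_cst).
Qed.

Lemma arc_sig_cont g : is_arc g x y -> {within I, continuous (sig \o g)}.
Proof.
case=> cg _; apply: within_continuous_comp => // z _; exact: refl_cont.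
Qed.

Lemma arc_sig_inj g : is_arc g x y -> injI (sig \o g).
Proof.
case=> _ [ig _] s t Is It /= e; apply: ig => //.
by rewrite -(refl_invol xy (g s)) e refl_invol.
Qed.

Lemma arc_fix g : is_arc g x y -> (forall t, I t -> (g @` I) (sig (g t))) ->
  forall t, I t -> sig (g t) = g t.
Proof.
move=> ag part; have [cg [ig [e0 e1]]] := ag.
apply: tau.
- exact: cg.
- exact: ig.
- exact: refl_cont.
- exact: refl_invol.
- by rewrite e0 (refl_x xy).
- by move=> t It; have [t' It' e] := part t It; exists t'.
Qed.

Lemma bd_sig g t : (g @` I `<=` bdry S) -> I t -> bdry S (sig (g t)).
Proof. move=> sub It; apply: bdry_refl => //; apply: sub; by exists t. Qed.

Lemma arc_mid g : is_arc g x y -> (forall t, I t -> sig (g t) = g t) ->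
  (g @` I) ((x.1 + y.1) / 2, (x.2 + y.2) / 2).
Proof.
move=> ag fx; have [cg [ig [e0 e1]]] := ag.
have cp : {within `[0, 1]%classic, continuous (proj \o g)}.
  apply: within_continuous_comp; first by move=> z _; exact: proj_cont.
  by rewrite -I01E.
set D := (y.1 - x.1) ^+ 2 + (y.2 - x.2) ^+ 2.
have p0 : (proj \o g) 0 = 0 by rewrite /= e0 /proj !subrr !mul0r addr0.
have p1 : (proj \o g) 1 = D by rewrite /= e1 /proj /D !expr2.
have D0 : 0 <= D by rewrite /D addr_ge0 // sqr_ge0.
have hv : Num.min ((proj \o g) 0) ((proj \o g) 1) <= D / 2 <= Num.max ((proj \o g) 0) ((proj \o g) 1).
  rewrite p0 p1 (min_idPl D0) (max_idPr D0); apply/andP; split; lra.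
have [c Ic pc] := @IVT R (proj \o g) 0 1 (D / 2) ler01 cp hv.
have Ic' : I c by move: Ic; rewrite in_itv /=.
exists c => //; apply: mid_fix => //; exact: fx.
Qed.

Lemma sig_side2 t : I t -> (g1 @` I) (sig (g2 t)).
Proof.
have [cg1 [ig1 [e10 e11]]] := a1.
have [cg2 [ig2 [e20 e21]]] := a2.
have sub1 : g1 @` I `<=` bdry S by rewrite hb => z h; left.
have sub2 : g2 @` I `<=` bdry S by rewrite hb => z h; right.
have cl1 := closed_img a1; have cl2 := closed_img a2.
have dis : forall z, (g1 @` I) z -> (g2 @` I) z -> z = x \/ z = y.
  move=> z h1 h2; have : (g1 @` I `&` g2 @` I) z by split.
  by rewrite hi.
have I0 : I 0 by rewrite /I01 /= lexx ler01.
have I1 : I 1 by rewrite /I01 /= lexx ler01.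
have X1 : (g1 @` I) x by exists 0.
have Y1 : (g1 @` I) y by exists 1.
have X2 : (g2 @` I) x by exists 0.
have Y2 : (g2 @` I) y by exists 1.
have hx : sig x = x := refl_x xy.
have hy : sig y = y := refl_y xy.
have h20 : (sig \o g2) 0 = x by rewrite /= e20 hx.
have h21 : (sig \o g2) 1 = y by rewrite /= e21 hy.
have h10 : (sig \o g1) 0 = x by rewrite /= e10 hx.
have h11 : (sig \o g1) 1 = y by rewrite /= e11 hy.
have d2 := @dich R (sig \o g2) _ _ x y (arc_sig_cont a2) (arc_sig_inj a2) h20 h21 cl1 cl2.
have cov2 : forall u, I u -> (g1 @` I) ((sig \o g2) u) \/ (g2 @` I) ((sig \o g2) u).
  move=> u Iu; have := bd_sig sub2 Iu; by rewrite hb.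
have cov1 : forall u, I u -> (g1 @` I) ((sig \o g1) u) \/ (g2 @` I) ((sig \o g1) u).
  move=> u Iu; have := bd_sig sub1 Iu; by rewrite hb.
have [A|B] := d2 cov2 dis X1 Y1 X2 Y2.
  by move=> It; exact: A.
have fx2 := arc_fix a2 B.
have d1 := @dich R (sig \o g1) _ _ x y (arc_sig_cont a1) (arc_sig_inj a1) h10 h11 cl1 cl2.
have [A1|B1] := d1 cov1 dis X1 Y1 X2 Y2.
- have fx1 := arc_fix a1 A1.
  have [c1 Ic1 m1] := arc_mid a1 fx1.
  have [c2 Ic2 m2] := arc_mid a2 fx2.
  exfalso.
  have M1 : (g1 @` I) ((x.1 + y.1) / 2, (x.2 + y.2) / 2) by exists c1.
  have M2 : (g2 @` I) ((x.1 + y.1) / 2, (x.2 + y.2) / 2) by exists c2.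
  have [h|h] := dis _ M1 M2.
    exact: (mid_neq_x xy h).
  exact: (mid_neq_y xy h).
- exfalso.
  have Ih : I (1/2) by rewrite /I01 /=; apply/andP; split; lra.
  have [t' It' e] := B1 _ Ih.
  have e2 : sig (g1 (1/2)) = g2 t' by rewrite e.
  have e' : g1 (1/2) = g2 t' by rewrite -(refl_invol xy (g1 (1/2))) e2 fx2.
  have M1 : (g1 @` I) (g1 (1/2)) by exists (1/2).
  have M2 : (g2 @` I) (g1 (1/2)) by rewrite e'; exists t'.
  have [h|h] := dis _ M1 M2.
    have : 1/2 = (0:R) by apply: ig1 => //; rewrite h e10.
    lra.
  have : 1/2 = (1:R) by apply: ig1 => //; rewrite h e11.
  lra.
Qed.
End Sym2.
Section Path.
Variable R : realType.
Notation pt := (R * R)%type.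

Lemma bdry_path (S : set pt) (r : R -> pt) (a b : R) : closed S -> continuous r ->
  a <= b -> S (r a) -> ~ S (r b) -> exists t, a <= t < b /\ bdry S (r t).
Proof.
move=> cS cr ab Sa nSb.
have clS : closure S = S by rewrite -(closure_id S).1.
apply: contrapT => hn.
have nb : forall t, a <= t < b -> ~ bdry S (r t) by move=> t ht hb; apply: hn; exists t.
have ablt : a < b by rewrite lt_neqAle ab andbT; apply/eqP => e; apply: nSb; rewrite -e.
have intS : forall t, a <= t <= b -> S (r t) -> interior S (r t).
  move=> t /andP[h1 h2] St; apply: contrapT => ni; apply: (nb t).
    apply/andP; split => //; rewrite lt_neqAle h2 andbT; apply/eqP => e; apply: nSb; by rewrite -e.
  by rewrite /bdry clS; split.
have : ~ connected `[a, b]%classic.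
  apply/connectedPn.
  exists (fun c => if c then [set t | a <= t <= b /\ ~ S (r t)]
                 else [set t | a <= t <= b /\ interior S (r t)]); split.
  - case.
      by exists b; split => //; rewrite ab lexx.
    exists a; split; first by rewrite lexx ab.
    by apply: intS => //; rewrite lexx ab.
  - apply/seteqP; split => t /=.
      rewrite in_itv /= => ht.
      have [St|nSt] := pselect (S (r t)); [left; split => //; exact: intS|by right].
    by rewrite in_itv /=; case => -[].
  - split; apply/seteqP; split => // t [].
      move=> ct [ht nSt].
      have o : open (~` S) := closed_openC cS.
      have nb1 : nbhs (r t) (~` S) by apply: open_nbhs_nbhs; split.
      have nb2 : nbhs t (r @^-1` (~` S)) := cr t _ nb1.
      have [s [[_ hs] hs2]] := ct _ nb2.
      by apply: hs2; apply: interior_subset.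
    move=> [ht iSt] ct.
    have nb2 : nbhs t (r @^-1` S) := cr t _ iSt.
    have [s [[_ hs] hs2]] := ct _ nb2.
    by apply: hs.
by move=> h; apply: h; exact: segment_connected.
Qed.

Lemma bdry_path' (S : set pt) (r : R -> pt) (a b : R) : closed S -> continuous r ->
  a <= b -> ~ S (r a) -> S (r b) -> exists t, a < t <= b /\ bdry S (r t).
Proof.
move=> cS cr ab nSa Sb.
have cr' : continuous (fun t => r (- t)).
  move=> t; apply: continuous_comp; last exact: cr.
  exact: oppr_continuous.
have ab' : - b <= - a by rewrite lerN2.
have Sb' : S (r (- - b)) by rewrite opprK.
have nSa' : ~ S (r (- - a)) by rewrite opprK.
have [t [/andP[h1 h2] bt]] := @bdry_path S (fun t => r (- t)) (- b) (- a) cS cr' ab' Sb' nSa'.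
exists (- t); split => //; apply/andP; split; [by rewrite ltrNr|by rewrite lerNl].
Qed.
End Path.
Section Arith2.
Variable R : realFieldType.
Lemma arith_dn (P t K D : R) : 0 < t -> t * D <= 1 -> 0 < D -> 0 < K ->
  P - 2 * t * K + t ^+ 2 * K * D < P.
Proof.
move=> *.
have : t ^+ 2 * K * D = t * K * (t * D) by rewrite expr2; ring.
have : 0 < t * K by rewrite mulr_gt0.
have : t * K * (t * D) <= t * K.
  have h : 0 <= t * K * (1 - t * D) by rewrite mulr_ge0 ?subr_ge0 // ltW // mulr_gt0.
  by rewrite mulrBr mulr1 subr_ge0 in h.
have : 0 < t * K by rewrite mulr_gt0.
lra.
Qed.
Lemma arith_foot (P K D : R) : 0 < D -> 0 <= K -> P - 2 * (1 / D) * K + (1 / D) ^+ 2 * K * D <= P.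
Proof.
move=> D0 K0.
have -> : P - 2 * (1 / D) * K + (1 / D) ^+ 2 * K * D = P - K / D by field; rewrite gt_eqF.
have : 0 <= K / D by rewrite divr_ge0 // ltW.
lra.
Qed.
Lemma arith_neg (l m D : R) : l < m -> m <= 0 -> 0 < D ->
  m ^+ 2 * D < l ^+ 2 * D /\ (m - 1) ^+ 2 * D < (l - 1) ^+ 2 * D.
Proof.
move=> *; split; rewrite ltr_pM2r //; nra.
Qed.
Lemma arith_pos (l m D : R) : 1 <= m -> m < l -> 0 < D ->
  m ^+ 2 * D < l ^+ 2 * D /\ (m - 1) ^+ 2 * D < (l - 1) ^+ 2 * D.
Proof.
move=> *; split; rewrite ltr_pM2r //; nra.
Qed.
End Arith2.
Section Arith.
Variable R : realFieldType.
Lemma arith1 (P A T D B : R) : 0 <= P -> 0 <= A -> 0 < D -> 1 <= T -> T*D = B+1+D ->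
  P + A + T^+2 * D <= B -> False.
Proof. move=> *. have : T * D <= T^+2 * D by rewrite expr2 -mulrA ler_peMl //; nra. nra. Qed.
Lemma arithT1 (B D : R) : 0 <= B -> 0 < D -> 1 <= (B + 1) / D + 1.
Proof. move=> *. rewrite lerDr divr_ge0 //; lra. Qed.
Lemma arith_up (P t a D : R) : 0 <= t -> 0 <= a -> 0 < D -> P <= P + 2 * t * a + t ^+ 2 * D.
Proof. move=> *. have : 0 <= t ^+ 2 * D by rewrite mulr_ge0 ?sqr_ge0 // ltW. have : 0 <= 2 * t * a by rewrite !mulr_ge0. lra. Qed.

End Arith.

Section Down.
Variable R : realType.
Notation pt := (R * R)%type.
Variables (S : set pt) (x y : pt) (B : R).
Hypothesis xy : x <> y.
Hypothesis cS : closed S.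
Hypothesis hB : forall z, S z -> sq z x <= B.
Hypothesis segS : segment x y `<=` S.
Hypothesis Comp : forall u w, bdry S u -> bdry S w ->
  (sq u x <= sq w x /\ sq w y <= sq u y) \/ (sq w x <= sq u x /\ sq u y <= sq w y).

Lemma lin_cont (a c : R) : continuous (fun t : R => a + t * c).
Proof. move=> t; apply: cvgD; [exact: cvg_cst|apply: cvgM; [exact: cvg_id|exact: cvg_cst]]. Qed.

Lemma Dpos : 0 < (y.1 - x.1) ^+ 2 + (y.2 - x.2) ^+ 2.
Proof. by rewrite lt_neqAle eq_sym (D_neq0 xy) addr_ge0 // sqr_ge0. Qed.

Lemma Sx : S x.
Proof. apply: segS; exists 0; first by rewrite lexx ler01. by case: x => ? ? /=; rewrite !mul0r !addr0. Qed.
Lemma Sy : S y.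
Proof. apply: segS; exists 1; first by rewrite lexx ler01. by case: x y => ? ? [? ?] /=; rewrite !mul1r; congr pair; ring. Qed.

Lemma up_bdry p : S p -> exists w, bdry S w /\ sq p x <= sq w x /\ sq p y <= sq w y.
Proof.
move=> Sp.
have hD := Dpos.
set D := (y.1 - x.1) ^+ 2 + (y.2 - x.2) ^+ 2 in hD.
have hB0 : 0 <= B by have := hB Sx; rewrite sqxx.
set k := (p.1 - x.1) * (-(y.2 - x.2)) + (p.2 - x.2) * (y.1 - x.1).
pose m : R := if 0 <= k then 1 else -1.
have m2 : m * m = 1 by rewrite /m; case: ifP => _; rewrite ?mulr1 ?mulrNN ?mulr1.
have mk : 0 <= m * k.
  rewrite /m; case: ifP => h; first by rewrite mul1r.
  by rewrite mulN1r oppr_ge0; move: h; rewrite leNgt => /negbFE /ltW.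
pose r := fun t : R => (p.1 + t * (m * (-(y.2 - x.2))), p.2 + t * (m * (y.1 - x.1))).
have ex : forall t, sq (r t) x = sq p x + 2 * t * (m * k) + t ^+ 2 * (m * m) * D.
  by move=> t; rewrite /sq /r /k /D /=; ring.
have ey : forall t, sq (r t) y = sq p y + 2 * t * (m * k) + t ^+ 2 * (m * m) * D.
  by move=> t; rewrite /sq /r /k /D /=; ring.
have cr : continuous r by apply: cont_pair; apply: lin_cont.
pose T := (B + 1) / D + 1.
have TD : T * D = B + 1 + D by rewrite /T mulrDl mul1r mulfVK // gt_eqF.
have T1 : 1 <= T := arithT1 hB0 hD.
have nST : ~ S (r T).
  have T0 : 0 <= T by exact: (le_trans ler01 T1).
  have A0 : 0 <= 2 * T * (m * k) by apply: mulr_ge0 => //; apply: mulr_ge0.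
  move=> h; have := hB h; rewrite ex m2 mulr1 => hh.
  exact: (arith1 (sq_ge0 p x) A0 hD T1 TD hh).
have S0 : S (r 0) by rewrite /r !mul0r !addr0; case: (p) Sp.
have T0 : 0 <= T by exact: (le_trans ler01 T1).
have [t [/andP[t0 tT] bt]] := bdry_path cS cr T0 S0 nST.
exists (r t); split => //; rewrite ex ey m2 mulr1.
by split; apply: arith_up.
Qed.
Lemma down_bdry q : ~ S q -> exists w, bdry S w /\ sq w x < sq q x /\ sq w y < sq q y.
Proof.
move=> nSq.
have hD := Dpos.
set D := (y.1 - x.1) ^+ 2 + (y.2 - x.2) ^+ 2 in hD.
have hD0 : D != 0 by rewrite gt_eqF.
set k := (q.1 - x.1) * (-(y.2 - x.2)) + (q.2 - x.2) * (y.1 - x.1).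
pose r := fun t : R => (q.1 + t * (- (k * (-(y.2 - x.2)))), q.2 + t * (- (k * (y.1 - x.1)))).
have ex : forall t, sq (r t) x = sq q x - 2 * t * (k * k) + t ^+ 2 * (k * k) * D.
  by move=> t; rewrite /sq /r /k /D /=; ring.
have ey : forall t, sq (r t) y = sq q y - 2 * t * (k * k) + t ^+ 2 * (k * k) * D.
  by move=> t; rewrite /sq /r /k /D /=; ring.
have cr : continuous r by apply: cont_pair; apply: lin_cont.
set l := ((q.1 - x.1) * (y.1 - x.1) + (q.2 - x.2) * (y.2 - x.2)) / D.
pose rho := fun m : R => (x.1 + m * (y.1 - x.1), x.2 + m * (y.2 - x.2)).
have crho : continuous rho by apply: cont_pair; apply: lin_cont.
have hl : r (1 / D) = rho l.
  rewrite /r /rho /l /k /D; congr pair; field; exact: (D_neq0 xy).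
have rhox : forall m, sq (rho m) x = m ^+ 2 * D by move=> m; rewrite /sq /rho /D /=; ring.
have rhoy : forall m, sq (rho m) y = (m - 1) ^+ 2 * D by move=> m; rewrite /sq /rho /D /=; ring.
have r0 : r 0 = q by rewrite /r !mul0r !addr0; case: (q).
have kk0 : 0 <= k * k by rewrite -expr2 sqr_ge0.
have iD : 0 < 1 / D by rewrite divr_gt0.
have [Sh|nSh] := pselect (S (r (1 / D))).
  have nS0 : ~ S (r 0) by rewrite r0.
  have [t [/andP[t0 tD] bt]] := bdry_path' cS cr (ltW iD) nS0 Sh.
  have kn : 0 < k * k.
    rewrite lt_neqAle kk0 andbT eq_sym; apply/eqP => kz.
    have k0 : k = 0 by apply/eqP; rewrite -sqrf_eq0 expr2 kz.
    apply: nSq; move: Sh; rewrite /r k0 !mul0r !oppr0 !mulr0 !addr0; by case: (q).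
  have tD1 : t * D <= 1 by move: tD; rewrite ler_pdivlMr // mul1r.
  exists (r t); split => //; rewrite ex ey; split; exact: arith_dn.
have fx : sq (r (1 / D)) x <= sq q x by rewrite ex; exact: arith_foot.
have fy : sq (r (1 / D)) y <= sq q y by rewrite ey; exact: arith_foot.
rewrite hl in nSh fx fy; rewrite rhox in fx; rewrite rhoy in fy.
have [l0|l0] := ltP l 0.
  have S0 : S (rho 0) by rewrite /rho !mul0r !addr0; case: (x) Sx.
  have [m [/andP[h1 h2] bm]] := bdry_path' cS crho (ltW l0) nSh S0.
  have [a1 a2] := arith_neg h1 h2 hD.
  exists (rho m); split => //; rewrite rhox rhoy; split.
    exact: (lt_le_trans a1 fx).
  exact: (lt_le_trans a2 fy).
have [l1|l1] := leP l 1.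
  exfalso; apply: nSh; apply: segS; exists l; first by rewrite l0 l1.
  by [].
have S1 : S (rho 1) by rewrite /rho !mul1r; move: Sy; case: (x) (y) => ? ? [? ?] /=; congr S; congr pair; ring.
have [m [/andP[h1 h2] bm]] := bdry_path cS crho (ltW l1) S1 nSh.
have [a1 a2] := arith_pos h1 h2 hD.
exists (rho m); split => //; rewrite rhox rhoy; split.
  exact: (lt_le_trans a1 fx).
exact: (lt_le_trans a2 fy).
Qed.
Lemma downset p q : S p -> sq q x <= sq p x -> sq q y <= sq p y -> S q.
Proof.
move=> Sp hx hy; apply: contrapT => nSq.
have [w [bw [wx wy]]] := up_bdry Sp.
have [v [bv [vx vy]]] := down_bdry nSq.
case: (Comp bw bv) => -[h1 h2].
  have := lt_le_trans (le_lt_trans h1 vx) (le_trans hx wx); by rewrite ltxx.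
have := lt_le_trans (le_lt_trans h2 vy) (le_trans hy wy); by rewrite ltxx.
Qed.
End Down.
Section Arith3.
Variable R : realFieldType.
Lemma arith_eqF (a b a' b' : R) : (a <= a' /\ b' <= b) \/ (a' <= a /\ b <= b') ->
  a - b = a' - b' -> a = a' /\ b = b'.
Proof. by case=> -[h1 h2] e; split; lra. Qed.
Lemma arith_mono (a b a' b' : R) : (a <= a' /\ b' <= b) \/ (a' <= a /\ b <= b') ->
  a - b <= a' - b' -> a <= a' /\ b' <= b.
Proof. by case=> -[h1 h2] e; split; lra. Qed.
Lemma arith_mid (u w : R) : w < u -> w < (u + w) / 2 < u.
Proof. move=> h; apply/andP; split; lra. Qed.
End Arith3.

Lemma ivt_up (R : realType) (f : R -> R) (a b v : R) : a <= b ->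
  {within `[a, b]%classic, continuous f} -> f a <= v <= f b ->
  exists2 c, a <= c <= b & f c = v.
Proof.
move=> ab cf /andP[h1 h2].
have hv : Num.min (f a) (f b) <= v <= Num.max (f a) (f b).
  rewrite (min_idPl (le_trans h1 h2)) (max_idPr (le_trans h1 h2)); by apply/andP.
have [c hc e] := IVT ab cf hv; exists c => //; by move: hc; rewrite in_itv.
Qed.

Lemma ivt_dn (R : realType) (f : R -> R) (a b v : R) : a <= b ->
  {within `[a, b]%classic, continuous f} -> f b <= v <= f a ->
  exists2 c, a <= c <= b & f c = v.
Proof.
move=> ab cf /andP[h1 h2].
have hv : Num.min (f a) (f b) <= v <= Num.max (f a) (f b).
  rewrite (min_idPr (le_trans h1 h2)) (max_idPl (le_trans h1 h2)); by apply/andP.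
have [c hc e] := IVT ab cf hv; exists c => //; by move: hc; rewrite in_itv.
Qed.

Section Back.
Variable R : realType.
Notation pt := (R * R)%type.
Notation I := (@I01 R).
Variables (S : set pt) (x y : pt) (Fam : set pt).
Hypothesis xy : x <> y.
Hypothesis cS : closed S.
Hypothesis hS : S = \bigcup_(rs in Fam) (cdisk x rs.1 `&` cdisk y rs.2).

Lemma bdryS z : bdry S z -> S z.
Proof. by rewrite /bdry -(closure_id S).1 // => -[]. Qed.

Lemma no_strict p c : bdry S p -> S c -> sq p x < sq c x -> sq p y < sq c y -> False.
Proof.
move=> [_ nint] Sc h1 h2; apply: nint.
pose O := [set z | sq z x < sq c x] `&` [set z | sq z y < sq c y].
have oO : open O.
  apply: openI.
    exact: ((continuousP _).1 (@sq_cont R x) _ (@open_lt R _)).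
  exact: ((continuousP _).1 (@sq_cont R y) _ (@open_lt R _)).
have OS : O `<=` S.
  move=> z [/= zx zy]; move: Sc; rewrite hS => -[rs Frs [/= cx cy]].
  exists rs => //; split; rewrite /cdisk /=.
    by apply: le_trans cx; rewrite edist_le; exact: ltW zx.
  by apply: le_trans cy; rewrite edist_le; exact: ltW zy.
have : nbhs p O by apply: open_nbhs_nbhs; split.
by apply: filterS.
Qed.

Lemma compB u w : bdry S u -> bdry S w ->
  (sq u x <= sq w x /\ sq w y <= sq u y) \/ (sq w x <= sq u x /\ sq u y <= sq w y).
Proof.
move=> bu bw.
case: (ltgtP (sq u x) (sq w x)) => hx; case: (ltgtP (sq u y) (sq w y)) => hy.
all: first [by exfalso; apply: (no_strict bu (bdryS bw)) | by exfalso; apply: (no_strict bw (bdryS bu)) | by left | by right].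
Qed.
End Back.
Section Back2.
Variable R : realType.
Notation pt := (R * R)%type.
Notation I := (@I01 R).
Variables (S : set pt) (x y : pt) (Fam : set pt).
Hypothesis xy : x <> y.
Hypothesis cS : closed S.
Hypothesis hS : S = \bigcup_(rs in Fam) (cdisk x rs.1 `&` cdisk y rs.2).

Definition Fz (z : pt) := sq z x - sq z y.
Lemma F_cont : continuous Fz.
Proof. move=> z; apply: cvgB; [exact: sq_cont|exact: sq_cont]. Qed.

Lemma mono g : is_arc g x y -> g @` I `<=` bdry S ->
  forall s t, 0 <= s -> s <= t -> t <= 1 ->
  sq (g s) x <= sq (g t) x /\ sq (g t) y <= sq (g s) y.
Proof.
move=> [cg [ig [e0 e1]]] sub.
have comp := compB cS hS.
have bd : forall r, I r -> bdry S (g r) by move=> r Ir; apply: sub; exists r.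
have I0 : I 0 by rewrite /I01 /= lexx ler01.
have I1 : I 1 by rewrite /I01 /= lexx ler01.
have bx : bdry S x by rewrite -e0; exact: bd.
have by_ : bdry S y by rewrite -e1; exact: bd.
have bounds : forall z, bdry S z -> Fz x <= Fz z /\ Fz z <= Fz y.
  move=> z bz; split.
    case: (comp z x bz bx) => -[h1 h2].
      have z0 : sq z x = 0.
        have h0 : sq z x <= 0 by move: h1; rewrite sqxx.
        by apply/eqP; rewrite eq_le h0 sq_ge0.
      by rewrite (sq_eq0 z0).
    by rewrite /Fz sqxx; move: h1 h2; rewrite sqxx => h1 h2; lra.
  case: (comp z y bz by_) => -[h1 h2].
    by rewrite /Fz sqxx; move: h1 h2; rewrite sqxx => h1 h2; lra.
  have z0 : sq z y = 0.
    have h0 : sq z y <= 0 by move: h2; rewrite sqxx.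
    by apply/eqP; rewrite eq_le h0 sq_ge0.
  by rewrite (sq_eq0 z0).
have cf : forall a b, 0 <= a -> b <= 1 -> {within `[a, b]%classic, continuous (Fz \o g)}.
  move=> a b a0 b1; apply: within_continuous_comp; first by move=> z _; exact: F_cont.
  exact: sub_cont.
have Fmono : forall s t, I s -> I t -> s <= t -> Fz (g s) <= Fz (g t).
  move=> s t Is It st; rewrite leNgt; apply/negP => lt.
  move: (Is) (It); rewrite /I01 /= => /andP[s0 s1] /andP[t0 t1].
  set v := (Fz (g s) + Fz (g t)) / 2.
  have /andP[v1 v2] := arith_mid lt.
  have [bxs _] := bounds _ (bd _ Is).
  have [bxt byt] := bounds _ (bd _ It).
  have [_ bys] := bounds _ (bd _ Is).
  have h1 : (Fz \o g) 0 <= v <= (Fz \o g) s.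
    by rewrite /= e0; apply/andP; split; [exact: (le_trans bxt (ltW v1))|exact: ltW v2].
  have [r1 /andP[r10 r1s] f1] := ivt_up s0 (cf 0 s (lexx 0) s1) h1.
  have h2 : (Fz \o g) t <= v <= (Fz \o g) s.
    by apply/andP; split; [exact: ltW v1|exact: ltW v2].
  have [r2 /andP[r2s r2t] f2] := ivt_dn st (cf s t s0 t1) h2.
  have h3 : (Fz \o g) t <= v <= (Fz \o g) 1.
    by rewrite /= e1; apply/andP; split; [exact: ltW v1|exact: (le_trans (ltW v2) bys)].
  have [r3 /andP[r3t r31] f3] := ivt_up t1 (cf t 1 t0 (lexx 1)) h3.
  have Ir1 : I r1 by apply: (I_le I0 Is); rewrite r10 r1s.
  have Ir2 : I r2 by apply: (I_le Is It); rewrite r2s r2t.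
  have Ir3 : I r3 by apply: (I_le It I1); rewrite r3t r31.
  have vs : v != Fz (g s) by rewrite lt_eqF.
  have vt : v != Fz (g t) by rewrite gt_eqF.
  have n12 : g r2 <> g r1.
    move=> e; have er := ig _ _ Ir2 Ir1 e.
    have : r1 = s by apply/eqP; rewrite eq_le r1s -er r2s.
    by move=> es; move: f1; rewrite /= es => f1; move: vs; rewrite -f1 eqxx.
  have n13 : g r3 <> g r1.
    move=> e; have er := ig _ _ Ir3 Ir1 e.
    have : r1 = s by apply/eqP; rewrite eq_le r1s -er (le_trans st r3t).
    by move=> es; move: f1; rewrite /= es => f1; move: vs; rewrite -f1 eqxx.
  have n23 : g r2 <> g r3.
    move=> e; have er := ig _ _ Ir2 Ir3 e.
    have : r2 = t by apply/eqP; rewrite eq_le r2t er r3t.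
    by move=> es; move: f2; rewrite /= es => f2; move: vt; rewrite -f2 eqxx.
  have [q1 q2] := arith_eqF (comp _ _ (bd _ Ir2) (bd _ Ir1)) (etrans f2 (esym f1)).
  have [q3 q4] := arith_eqF (comp _ _ (bd _ Ir3) (bd _ Ir1)) (etrans f3 (esym f1)).
  exact: (three xy q1 q2 q3 q4 n12 n13 n23).
move=> s t s0 st t1.
have Is : I s by rewrite /I01 /= s0 (le_trans st t1).
have It : I t by rewrite /I01 /= t1 (le_trans s0 st).
exact: arith_mono (comp _ _ (bd _ Is) (bd _ It)) (Fmono s t Is It st).
Qed.
End Back2.
Lemma bnd (R : realType) (S : set (R*R)) : compact S -> exists K, forall z, S z -> `|z.1| <= K /\ `|z.2| <= K.
Proof.
move=> cpt; have [M [_ HM]] := compact_bounded cpt.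
exists (M + 1) => z Sz.
have hM : M < M + 1 by rewrite ltrDl.
have := HM (M + 1) hM z Sz.
rewrite /= => h.
have e : `|z| = Num.max `|z.1| `|z.2| by [].
by move: h; rewrite e ge_max => /andP[].
Qed.

Lemma sqb (R : realFieldType) (a b K : R) : `|a| <= K -> (a - b) ^+ 2 <= (K + `|b|) ^+ 2.
Proof.
move=> h.
have h1 : -K <= a <= K by rewrite -ler_norml.
have h2 : - `|b| <= b <= `|b| by rewrite -ler_norml.
move: h1 h2 => /andP[h3 h4] /andP[h5 h6].
nra.
Qed.

Unset Implicit Arguments.
Theorem mainTheorem3 (R : realType) (S : set (R * R)%type) (x y : (R * R)%type) :
  symmetric_adornment S x y ->
  (slender S x y <->
   exists F : set (R * R)%type,
     S = \bigcup_(rs in F) (cdisk x rs.1 `&` cdisk y rs.2)).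
Proof.
case => -[[cpt _] xy [bx by_] segS [g1 [g2 [a1 a2 hb hi]]]] symS.
have cS := compact_closed_pt cpt.
split.
- move=> sl.
  have [K hK] := bnd cpt.
  pose B := (K + `|x.1|) ^+ 2 + (K + `|x.2|) ^+ 2.
  have hB : forall z, S z -> sq z x <= B.
    move=> z Sz; have [k1 k2] := hK z Sz; rewrite /sq /B.
    by apply: lerD; apply: sqb.
  have sub1 : g1 @` @I01 R `<=` bdry S by rewrite hb => z h; left.
  have twin1 : forall z, bdry S z -> exists2 s, @I01 R s & sq (g1 s) x = sq z x /\ sq (g1 s) y = sq z y.
    move=> z; rewrite hb => -[[s Is <-]|[t It <-]]; first by exists s.
    have [s Is e] := sig_side2 xy cS symS a1 a2 hb hi It.
    by exists s => //; rewrite e sq_refl_x // sq_refl_y.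
  have Comp : forall u w, bdry S u -> bdry S w ->
      (sq u x <= sq w x /\ sq w y <= sq u y) \/ (sq w x <= sq u x /\ sq u y <= sq w y).
    move=> u w bu bw.
    have [s Is [e1 e2]] := twin1 u bu.
    have [t It [e3 e4]] := twin1 w bw.
    move: Is It; rewrite /I01 /= => /andP[s0 s1] /andP[t0 t1].
    have [st|ts] := leP s t.
      have [h1 h2] := sl g1 a1 sub1 s t s0 st t1.
      by left; move: h1 h2; rewrite !edist_le e1 e2 e3 e4.
    have [h1 h2] := sl g1 a1 sub1 t s t0 (ltW ts) s1.
    by right; move: h1 h2; rewrite !edist_le e1 e2 e3 e4.
  exists [set (Defs.edist p x, Defs.edist p y) | p in S].
  apply/seteqP; split.
    move=> p Sp; exists (Defs.edist p x, Defs.edist p y); first by exists p.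
    by split; rewrite /cdisk /=.
  move=> q [rs [p Sp <-] [/= h1 h2]].
  move: h1 h2; rewrite /cdisk /= !edist_le => h1 h2.
  exact: (downset xy cS hB segS Comp Sp h1 h2).
- move=> [Fam hS] g ag sub s t s0 st t1.
  have [h1 h2] := mono xy cS hS ag sub s0 st t1.
  by rewrite !edist_le.
Qed.
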